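(* Let $p$ be a prime, $m,t\ge1$, $R^t=\mathbb{F}_{p^m}[u]/\langle u^t\rangle$, $\omega(x)=\omega_0(x)+u\omega_1(x)+\dots+u^{t-1}\omega_{t-1}(x)\in R^t[x]$ with $\omega_i(x)\in\mathbb{F}_{p^m}[x]$, and $R^{t,\omega}=R^t[x]/\langle\omega(x)\rangle$. Let $\omega_0(x)=v_1(x)^{n_1}\cdots v_l(x)^{n_l}$ be the factorization of $\omega_0(x)$ into irreducible polynomials $v_j(x)\in\mathbb{F}_{p^m}[x]$ with positive integers $n_j$. Then the ideals of $R^{t,\omega}$ and their generators have one of the following forms. (a) The trivial ideals $\langle0\rangle$ and $\langle1\rangle$. (b) Any generator of a non-trivial ideal contained in $\langle u\rangle$ has the form $$u^{(t-1)-i}\bigl(v_1(x)^{k_{1,i}}v_2(x)^{k_{2,i}}\cdots v_l(x)^{k_{l,i}}\bigr)-u^{(t-1)-(i-1)}g(x)$$ for some $0\le i\le t-2$, $g(x)\in R^{t,\omega}$, and $0\le k_{j,i}\le n_j$ ($1\le j\le l$), not all $k_{j,i}=n_j$. In fact, any such ideal $I$ has the form $$I=\Bigl\langle u^{(t-1)-i_1}\bigl(v_1(x)^{k_{1,i_1}}\cdots v_l(x)^{k_{l,i_1}}\bigr)-u^{(t-1)-(i_1-1)}g_{i_1}(x),\ \dots,\ u^{(t-1)-i_n}\bigl(v_1(x)^{k_{1,i_n}}\cdots v_l(x)^{k_{l,i_n}}\bigr)-u^{(t-1)-(i_n-1)}g_{i_n}(x)\Bigr\rangle,$$ where $0\le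 i_1<i_2<\dots<i_n\le t-2$ and $g_{i_j}(x)\in R^{t,\omega}$ for $1\le j\le n$. (c) Any non-trivial ideal not contained in $\langle u\rangle$ has the form $$\langle v_1(x)^{k_{1}}v_2(x)^{k_{2}}\cdots v_l(x)^{k_{l}}+u\,r(x)\rangle+I,$$ where $r(x)\in R^{t,\omega}$, $0\le k_j\le n_j$, and $I$ is an ideal of $R^{t,\omega}$ contained in $\langle u\rangle$ (so $I$ is as described in (a) or (b)).
   Context: Elements of $\mathbb{F}_{p^m}[x]$ are regarded as elements of $R^{t,\omega}$ via the natural inclusion $\mathbb{F}_{p^m}\subseteq R^t$. A non-trivial ideal means an ideal different from $\langle 0\rangle$ and $\langle1\rangle$. Note $u^{t}=0$ in $R^{t,\omega}$. *)

(* Defs.v *)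
From HB Require Import structures.
From mathcomp Require Import all_boot all_order all_algebra.
From mathcomp Require Import boolp generic_quotient ring_quotient qpoly.
Set Implicit Arguments. Unset Strict Implicit. Unset Printing Implicit Defensive.
Import Order.TTheory GRing.Theory.
Local Open Scope ring_scope.
Local Open Scope quotient_scope.

Section Ideals.
Variable R : comNzRingType.

Definition is_ideal (I : R -> Prop) : Prop :=
  [/\ I 0, (forall a b, I a -> I b -> I (a + b)) &
      (forall r a, I a -> I (r * a))].

Definition gen_ideal (n : nat) (g : 'I_n -> R) : R -> Prop :=
  fun y => exists c : 'I_n -> R, y = \sum_(a < n) c a * g a.

Definition principal_ideal (x : R) : R -> Prop :=
  gen_ideal (fun _ : 'I_1 => x).

Definition ideal_sum (I J : R -> Prop) : R -> Prop :=
  fun y => exists a b, [/\ I a, J b & y = a + b].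

Definition ideal_eq (I J : R -> Prop) : Prop := forall y, I y <-> J y.

Definition ideal_sub (I J : R -> Prop) : Prop := forall y, I y -> J y.

Definition trivial_ideal (I : R -> Prop) : Prop :=
  ideal_eq I (principal_ideal 0) \/ ideal_eq I (principal_ideal 1).

End Ideals.

(* MathComp rings are non-zero, so the quotient ring structure needs  *)
(* <a> to be proper; when a is a unit (quotient = zero ring) we fall  *)
(* back to the zero ideal.  In the theorem below a is never a unit.   *)
Section PrincipalQuotient.
Variables (R : comNzRingType) (a : R).

Definition pideal_pred : pred R := fun y =>
  if `[< ~ exists c, c * a = 1 >] then `[< exists c, y = c * a >] else y == 0.

Lemma pideal_pred_closed : idealr_closed pideal_pred.
Proof.
rewrite /idealr_closed /pideal_pred.
case: (boolP `[< ~ exists c, c * a = 1 >]) => [/asboolP nu | _]; split.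
- by apply/asboolP; exists 0; rewrite mul0r.
- by apply/negP => /asboolP [c hc]; apply: nu; exists c; rewrite -hc.
- move=> r x y /asboolP [cx ->] /asboolP [cy ->]; apply/asboolP.
  by exists (r * cx + cy); rewrite mulrDl mulrA.
- by apply/eqP.
- by apply/negP => /eqP /eqP; rewrite oner_eq0.
- by move=> r x y; rewrite !unfold_in /= => /eqP -> /eqP ->; rewrite mulr0 addr0.
Qed.

HB.instance Definition _ := isIdealr.Build R pideal_pred pideal_pred_closed.

End PrincipalQuotient.

Definition pquot (R : comNzRingType) (a : R) : comNzRingType :=
  {ideal_quot (pideal_pred a : idealr R)}.

(* R^t = F[u]/<u^t>  (qpoly: polynomials in u reduced modulo u^t, t >= 1) *)
Definition Rt (F : finFieldType) (t : nat) : comNzRingType :=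
  {poly %/ ('X^t : {poly F})}.

Definition uRt (F : finFieldType) (t : nat) : {poly Rt F t} :=
  (qpolyX ('X^t : {poly F}))%:P.

Definition embRt (F : finFieldType) (t : nat) (f : {poly F}) : {poly Rt F t} :=
  map_poly (qpolyC ('X^t : {poly F})) f.

Definition omega (F : finFieldType) (t : nat) (w : nat -> {poly F}) : {poly Rt F t} :=
  \sum_(i < t) uRt F t ^+ i * embRt t (w i).

Definition Rtw (F : finFieldType) (t : nat) (w : nat -> {poly F}) : comNzRingType :=
  pquot (omega t w).

Definition uW (F : finFieldType) (t : nat) (w : nat -> {poly F}) : Rtw t w :=
  \pi_(Rtw t w) (uRt F t).

Definition embW (F : finFieldType) (t : nat) (w : nat -> {poly F}) (f : {poly F}) :
  Rtw t w := \pi_(Rtw t w) (embRt t f).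

(* Main.v *)
Require Import Defs.
From HB Require Import structures.
From mathcomp Require Import all_boot all_order all_algebra.
From mathcomp Require Import boolp generic_quotient ring_quotient qpoly.
From mathcomp Require Import ring zify.
Import GRing.Theory.
Local Open Scope ring_scope.

Module Aux.
Set Implicit Arguments. Unset Strict Implicit.
Local Open Scope quotient_scope.

Section PolyFacts.
Variable F : fieldType.
Implicit Types p q d : {poly F}.

Lemma irr_coprime p q : irreducible_poly p -> ~~ (p %| q) -> coprimep p q.
Proof.
move=> ip npq; rewrite -gcdp_eqp1 -size_poly_eq1.
apply/negPn/negP => hs.
have := ip _ hs (dvdp_gcdl p q) => /eqp_dvdl H.
by move: (dvdp_gcdr p q); rewrite H (negbTE npq).
Qed.

Lemma pow_div v k q : irreducible_poly v -> q %| v ^+ k ->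
  exists2 a, (a <= k)%N & q %= v ^+ a.
Proof.
move=> iv; elim: k q => [|k IH] q.
  by rewrite expr0 => h; exists 0%N => //; rewrite expr0 (dvdp_eqp1 h (eqpxx 1)).
move=> h; case: (boolP (v %| q)) => [/dvdpP [q' eq] | nvq].
  move: h; rewrite eq exprSr dvdp_mul2r ?irredp_neq0 // => /IH [a ha hq].
  by exists a.+1 => //; rewrite exprSr eqp_mulr.
have cq : coprimep q (v ^+ k.+1) by rewrite coprimep_sym coprimep_expl // irr_coprime.
move: h; rewrite -[v ^+ k.+1]mul1r Gauss_dvdpl // => h.
by exists 0%N => //; rewrite expr0 (dvdp_eqp1 h (eqpxx 1)).
Qed.

Lemma gcd_split d A B : coprimep A B -> d %| A * B ->
  d %= gcdp d A * gcdp d B.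
Proof.
move=> cAB hd; apply/andP; split.
  rewrite (eqp_dvdr _ (mulp_gcdl _ _ _)) dvdp_gcd dvdp_mulr ?dvdpp //=.
  by rewrite (eqp_dvdr _ (mulp_gcdr _ _ _)) dvdp_gcd dvdp_mull ?dvdpp.
rewrite Gauss_dvdp ?dvdp_gcdl //.
exact: (coprimep_dvdl (dvdp_gcdr _ _) (coprimep_dvdr (dvdp_gcdr _ _) cAB)).
Qed.

Lemma eqp_mul p1 p2 q1 q2 : p1 %= q1 -> p2 %= q2 -> p1 * p2 %= q1 * q2.
Proof. move=> h1 h2; exact: eqp_trans (eqp_mulr _ h1) (eqp_mull _ h2). Qed.

Variables (l : nat) (v : 'I_l -> {poly F}) (n : 'I_l -> nat).
Hypothesis v_irr : forall j, irreducible_poly (v j).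
Hypothesis v_dist : forall i j, i != j -> ~~ (v i %= v j).

Lemma v_cop i j : i != j -> coprimep (v i) (v j).
Proof.
move=> hij; apply: irr_coprime => //; apply/negP => h.
have [s1 _] := v_irr i.
have := (v_irr j) _ _ h; rewrite neq_ltn s1 orbT => /(_ isT) H.
by move: (v_dist hij); rewrite H.
Qed.

Lemma fact_seq (s : seq 'I_l) d : uniq s ->
  d %| \prod_(j <- s) v j ^+ n j ->
  exists k : 'I_l -> nat, (forall j, k j <= n j)%N /\ d %= \prod_(j <- s) v j ^+ k j.
Proof.
elim: s d => [|i s IH] d /=.
  move=> _; rewrite big_nil => h; exists (fun _ => 0%N); split => // .
  by rewrite big_nil (dvdp_eqp1 h (eqpxx 1)).
case/andP => nis us; rewrite big_cons => h.
have cop : coprimep (v i ^+ n i) (\prod_(j <- s) v j ^+ n j).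
  rewrite big_seq; elim/big_ind: _ => //; first exact: coprimep1.
    by move=> x y hx hy; rewrite coprimepMr hx hy.
  move=> j js; apply: coprimep_expl; apply: coprimep_expr; apply: v_cop.
  by apply/eqP => e; move: nis; rewrite e js.
have hsp := gcd_split cop h.
have [a ha h1] := pow_div (v_irr i) (dvdp_gcdr d (v i ^+ n i)).
have [k [hk h2]] := IH (gcdp d (\prod_(j <- s) v j ^+ n j)) us (dvdp_gcdr _ _).
exists (fun j => if j == i then a else k j); split.
  by move=> j; case: eqP => [->|].
rewrite big_cons eqxx.
have -> : \prod_(j <- s) v j ^+ (if j == i then a else k j) = \prod_(j <- s) v j ^+ k j.
  rewrite big_seq [RHS]big_seq; apply: eq_bigr => j js.
  by case: eqP => // e; move: nis; rewrite -e js.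
apply: (eqp_trans hsp); exact: eqp_mul.
Qed.

Lemma fact_div d : d %| \prod_(j < l) v j ^+ n j ->
  exists k : 'I_l -> nat, (forall j, k j <= n j)%N /\ d %= \prod_(j < l) v j ^+ k j.
Proof. exact: fact_seq (index_enum_uniq _). Qed.
End PolyFacts.

Section Gen.
Variable F : fieldType.
Variable L : {poly F} -> Prop.
Hypothesis LD : forall a b, L a -> L b -> L (a + b).
Hypothesis LM : forall r a, L a -> L (r * a).

Lemma gen_min N (f : {poly F}) : (size f <= N)%N -> f != 0 -> L f ->
  exists d, L d /\ forall g, L g -> d %| g.
Proof.
elim: N f => [|N IH] f.
  by rewrite leqn0 size_poly_eq0 => ->.
move=> sf fn0 Lf.
case: (EM (forall g, L g -> f %| g)) => [h|]; first by exists f.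
move=> /existsNP [g /not_implyP [Lg nfg]].
have r0 : g %% f != 0 by apply/negP => /eqP/modp_eq0P.
apply: (IH (g %% f)) => //.
  by rewrite -ltnS (leq_trans _ sf) // ltn_modp.
have -> : g %% f = g + (- (g %/ f)) * f by rewrite {2}(divp_eq g f); ring.
by apply: LD => //; apply: LM.
Qed.

Variables (l : nat) (v : 'I_l -> {poly F}) (n : 'I_l -> nat).
Hypothesis v_irr : forall j, irreducible_poly (v j).
Hypothesis v_dist : forall i j, i != j -> ~~ (v i %= v j).
Hypothesis Lw : L (\prod_(j < l) v j ^+ n j).

Lemma w0_neq0 : \prod_(j < l) v j ^+ n j != 0.
Proof.
apply/prodf_neq0 => j _; apply: expf_neq0; exact: irredp_neq0.
Qed.

Lemma gen_prod : exists k : 'I_l -> nat, [/\ forall j, (k j <= n j)%N,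
  L (\prod_(j < l) v j ^+ k j) & forall f, L f -> \prod_(j < l) v j ^+ k j %| f].
Proof.
have [d [Ld hd]] := gen_min (leqnn _) w0_neq0 Lw.
have [k [hk dk]] := fact_div v_irr v_dist (hd _ Lw).
exists k; split => //; last by move=> f /hd; rewrite (eqp_dvdl _ dk).
case/eqpP: dk => [[c1 c2] /andP [/= c1n c2n] e].
have -> : \prod_(j < l) v j ^+ k j = (c2^-1 * c1)%:P * d.
  by rewrite mul_polyC -scalerA e scalerA mulVf // scale1r.
exact: LM.
Qed.
End Gen.

Section Abs.
Variables (F : fieldType) (R : comNzRingType) (e : {rmorphism {poly F} -> R}).
Variables (u : R) (t : nat).
Hypothesis ut : u ^+ t = 0.
Hypothesis H1 : forall y, exists f z, y = e f + u * z.
Variables (l : nat) (v : 'I_l -> {poly F}) (n : 'I_l -> nat).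
Hypothesis v_irr : forall j, irreducible_poly (v j).
Hypothesis v_dist : forall i j, i != j -> ~~ (v i %= v j).
Hypothesis H2 : exists z, e (\prod_(j < l) v j ^+ n j) = u * z.

Let V (k : 'I_l -> nat) : R := \prod_(j < l) e (v j) ^+ k j.
Let P (k : 'I_l -> nat) : {poly F} := \prod_(j < l) v j ^+ k j.

Lemma VE k : V k = e (P k).
Proof. by rewrite /V /P rmorph_prod; apply: eq_bigr => j _; rewrite rmorphXn. Qed.

Lemma gen_add (N : nat) (G : 'I_N -> R) y1 y2 :
  gen_ideal G y1 -> gen_ideal G y2 -> gen_ideal G (y1 + y2).
Proof.
move=> [c1 ->] [c2 ->]; exists (fun a => c1 a + c2 a).
by rewrite -big_split; apply: eq_bigr => a _; rewrite mulrDl.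
Qed.

Lemma gen_mul (N : nat) (G : 'I_N -> R) r y :
  gen_ideal G y -> gen_ideal G (r * y).
Proof.
move=> [c ->]; exists (fun a => r * c a).
by rewrite mulr_sumr; apply: eq_bigr => a _; rewrite mulrA.
Qed.

Lemma gen_gen (N : nat) (G : 'I_N -> R) a : gen_ideal G (G a).
Proof.
exists (fun b => (b == a)%:R); rewrite (bigD1 a) //= eqxx mul1r big1 ?addr0 //.
by move=> b /negbTE ->; rewrite mul0r.
Qed.

Lemma gen_0 (N : nat) (G : 'I_N -> R) : gen_ideal G 0.
Proof. by exists (fun _ => 0); rewrite big1 // => b _; rewrite mul0r. Qed.

Lemma pr1 (x y : R) : principal_ideal x y <-> exists c, y = c * x.
Proof.
split => [[c ->]|[c ->]]; first by exists (c ord0); rewrite big_ord1.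
by exists (fun _ => c); rewrite big_ord1.
Qed.

Theorem abs_main (I : R -> Prop) : is_ideal I ->
    (ideal_sub I (principal_ideal u) /\
     exists (N : nat) (idx : 'I_N -> nat) (k : 'I_N -> 'I_l -> nat)
            (g : 'I_N -> R),
       [/\ forall a b : 'I_N, (a < b)%N -> (idx a < idx b)%N,
           forall a, (idx a + 2 <= t)%N,
           forall a j, (k a j <= n j)%N,
           forall a, exists j, (k a j < n j)%N &
           ideal_eq I (gen_ideal (fun a : 'I_N =>
              u ^+ (t.-1 - idx a) * V (k a) - u ^+ (t - idx a) * g a))])
    \/
    (~ ideal_sub I (principal_ideal u) /\
     exists (k : 'I_l -> nat) (r : R) (J : R -> Prop),
       [/\ forall j, (k j <= n j)%N,
           is_ideal J,
           ideal_sub J (principal_ideal u) &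
           ideal_eq I (ideal_sum (principal_ideal (V k + u * r)) J)]).
Proof.
case=> I0 ID IM.
have [z0 hz0] := H2.
pose L j f := exists z, I (u ^+ j * e f + u ^+ j.+1 * z).
have LD j a b : L j a -> L j b -> L j (a + b).
  move=> [za ha] [zb hb]; exists (za + zb).
  by have := ID _ _ ha hb; congr I; rewrite rmorphD; rewrite ?exprSr; rewrite ?exprSr; ring.
have LM j r a : L j a -> L j (r * a).
  move=> [za ha]; exists (e r * za).
  by have := IM (e r) _ ha; congr I; rewrite rmorphM; rewrite ?exprSr; rewrite ?exprSr; ring.
have Lw j : L j (P n).
  exists (- z0); rewrite hz0 exprS; have -> : u ^+ j * (u * z0) + u * u ^+ j * - z0 = 0 by rewrite ?exprSr; ring.
  exact: I0.
have hK : forall j, exists k : 'I_l -> nat, [/\ forall i, (k i <= n i)%N,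
    L j (P k) & forall f, L j f -> P k %| f].
  move=> j; exact: (gen_prod (LD j) (LM j) v_irr v_dist (Lw j)).
have [K hKK] := choice hK.
have hZ : forall j, exists z, I (u ^+ j * e (P (K j)) + u ^+ j.+1 * z).
  by move=> j; case: (hKK j) => _ [z hz] _; exists z.
have [Z hZZ] := choice hZ.
have dec j y : I y -> (exists z, y = u ^+ j * z) ->
    exists a z', y = u ^+ j * e a * e (P (K j)) + u ^+ j.+1 * z'.
  move=> Iy [z yz]; have [f [z' fz]] := H1 z.
  have Lf : L j f.
    exists z'; have -> : u ^+ j * e f + u ^+ j.+1 * z' = y by rewrite yz fz mulrDr exprSr -mulrA.
    exact: Iy.
  case: (hKK j) => _ _ /(_ _ Lf) /dvdpP [a fa]; exists a, z'.
  rewrite yz fz fa rmorphM; move: (e a) (e (P (K j))) => A B; rewrite ?exprSr; rewrite ?exprSr; ring.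
case: (EM (ideal_sub I (principal_ideal u))) => Isub; [left|right]; split => //.
- pose good j := [&& (0 < j)%N, (j < t)%N & [exists i, (K j i < n i)%N]].
  pose A := [seq i <- iota 0 t.-1 | good (t.-1 - i)%N].
  have memA a : (a \in A) = good (t.-1 - a)%N && (a < t.-1)%N.
    by rewrite mem_filter mem_iota add0n.
  have sA : sorted ltn A by apply: sorted_filter; [exact: ltn_trans | exact: iota_ltn_sorted].
  have idxA (a : 'I_(size A)) : nth 0%N A a \in A by apply: mem_nth.
  have key : forall G : 'I_(size A) -> R,
      (forall a, G a = u ^+ (t.-1 - nth 0%N A a) * e (P (K (t.-1 - nth 0%N A a)%N))
         + u ^+ (t.-1 - nth 0%N A a).+1 * Z (t.-1 - nth 0%N A a)%N) ->
      ideal_eq I (gen_ideal G).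
    move=> G hG y; split; last first.
      move=> [c ->]; apply: (big_ind (fun x => I x)) => // a _.
      apply: (IM); rewrite hG; exact: hZZ.
    have main : forall s j y, (t - j <= s)%N -> (0 < j)%N -> I y ->
        (exists z, y = u ^+ j * z) -> gen_ideal G y.
      elim=> [|s IH] j y' hs hj Iy hy.
        have -> : y' = 0.
          case: hy => z ->; rewrite -(subnKC (_ : t <= j)%N) ?exprD ?ut ?mul0r //.
          by lia.
        exact: gen_0.
      case: (leqP t j) => tj.
        have -> : y' = 0.
          by case: hy => z ->; rewrite -(subnKC tj) exprD ut !mul0r.
        exact: gen_0.
      have [a [z' ey]] := dec j y' Iy hy.
      case: (boolP (good j)) => gj.
        have jA : (t.-1 - j)%N \in A by rewrite memA subKn ?gj /=; lia.
        have ia : (index (t.-1 - j)%N A < size A)%N by rewrite index_mem.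
        pose a0 : 'I_(size A) := Ordinal ia.
        have ha0 : nth 0%N A a0 = (t.-1 - j)%N by rewrite /= nth_index.
        have Ga0 : G a0 = u ^+ j * e (P (K j)) + u ^+ j.+1 * Z j.
          by rewrite hG ha0 subKn //; lia.
        have -> : y' = e a * G a0 + (y' - e a * G a0) by ring.
        apply: gen_add; first by apply: gen_mul; apply: gen_gen.
        apply: (IH j.+1) => //; first lia.
          apply: (ID) => //; rewrite -mulN1r; apply: (IM); apply: (IM); rewrite Ga0; exact: hZZ.
        exists (z' - e a * Z j); rewrite ey Ga0; move: (e a) (e (P (K j))) => A1 B1.
        rewrite !exprSr; ring.
      have KE : P (K j) = P n.
        apply: eq_bigr => i _; congr (_ ^+ _); apply/eqP; rewrite eqn_leq.
        case: (hKK j) => -> _ _; rewrite leqNgt /=; apply/negP => hi.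
        by move: gj; rewrite /good hj tj /=; apply/negP/negPn/existsP; exists i.
      apply: (IH j.+1) => //; first lia.
      exists (e a * z0 + z'); rewrite ey KE hz0; move: (e a) => A1.
      rewrite !exprSr; ring.
    move=> Iy; apply: (main t 1%N) => //; first lia.
    by case/pr1: (Isub _ Iy) => c ->; exists c; rewrite expr1 mulrC.
  exists (size A), (fun a => nth 0%N A a), (fun a => K (t.-1 - nth 0%N A a)%N),
    (fun a => - Z (t.-1 - nth 0%N A a)%N); split.
  + move=> a b hab; apply: (sorted_ltn_nth ltn_trans 0%N sA) => //; rewrite inE ltn_ord //.
  + move=> a; have := idxA a; rewrite memA => /andP [_]; lia.
  + by move=> a j; case: (hKK (t.-1 - nth 0%N A a)%N) => H _ _; apply: H.
  + move=> a; have := idxA a; rewrite memA => /andP [/and3P [_ _ /existsP [i hi]] _].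
    by exists i.
  + apply: key => a; rewrite VE mulrN opprK; congr (_ + _ * _).
    have := idxA a; rewrite memA => /andP [_] ha; congr (u ^+ _); lia.
- exists (K 0%N), (Z 0%N), (fun y => I y /\ principal_ideal u y).
  case: (hKK 0%N) => hk _ _.
  have IG : I (V (K 0%N) + u * Z 0%N).
    by have := hZZ 0%N; rewrite VE expr0 mul1r expr1.
  split => //.
  + split; first by split => //; apply/pr1; exists 0; rewrite mul0r.
      move=> a b [Ia /pr1 [ca ea]] [Ib /pr1 [cb eb]]; split; first by apply: (ID).
      by apply/pr1; exists (ca + cb); rewrite ea eb mulrDl.
    move=> r a [Ia /pr1 [ca ea]]; split; first by apply: (IM).
    by apply/pr1; exists (r * ca); rewrite ea mulrA.
  + by move=> y [].
  + move=> y; split.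
      move=> Iy; have [a [z' hy]] := dec 0%N y Iy (ex_intro _ y (esym (mul1r y))).
      exists (e a * (V (K 0%N) + u * Z 0%N)), (y - e a * (V (K 0%N) + u * Z 0%N)).
      split; last by rewrite ?exprSr; ring.
      * by apply/pr1; exists (e a).
      * split; first by apply: (ID) => //; rewrite -mulN1r; apply: (IM); apply: (IM).
        apply/pr1; exists (z' - e a * Z 0%N).
        by rewrite hy VE expr0 expr1 mul1r; rewrite ?exprSr; rewrite ?exprSr; ring.
    move=> [a [b [/pr1 [c ->] [Ib _] ->]]].
    by apply: (ID) => //; apply: (IM).
Qed.
End Abs.

Section Conc.
Variables (F : finFieldType) (t : nat).
Local Notation T := (Rt F t.+1).
Local Notation Xt := ('X^(t.+1) : {poly F}).

Lemma mkXt : mk_monic Xt = Xt.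
Proof. by rewrite mk_monic_Xn. Qed.

Lemma coef0_in (p : {poly F}) : (val (in_qpoly Xt p) : {poly F})`_0 = p`_0.
Proof.
rewrite /= mkXt.
have := Pdiv.RingMonic.rdivp_eq (monicXn F t.+1) p.
move=> /(congr1 (fun q : {poly F} => q`_0)).
by rewrite coefD coefMXn /= add0r => <-.
Qed.

Definition s0 (c : T) : F := (val c : {poly F})`_0.

Lemma in_val (c : T) : in_qpoly Xt (val c) = c.
Proof. by apply: val_inj; exact: in_qpoly_small (size_mk_monic _). Qed.

Lemma s0_zmod : zmod_morphism s0.
Proof. by move=> a b; rewrite /s0 -coefB. Qed.

Lemma s0_monoid : monoid_morphism s0.
Proof.
split; first by rewrite /s0 /= coefC.
move=> a b; rewrite /s0 -[a]in_val -[b]in_val -rmorphM !coef0_in coef0M //.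
Qed.

HB.instance Definition _ := GRing.isZmodMorphism.Build T F s0 s0_zmod.
HB.instance Definition _ := GRing.isMonoidMorphism.Build T F s0 s0_monoid.


Lemma s0C a : s0 (qpolyC Xt a) = a.
Proof. by rewrite /s0 /= coefC. Qed.

Lemma s0X : s0 (qpolyX Xt) = 0.
Proof. by rewrite /s0 coef0_in coefX. Qed.

Lemma qX_pow : (qpolyX Xt) ^+ t.+1 = 0.
Proof.
rewrite /qpolyX -rmorphXn; apply: val_inj => /=; rewrite mkXt.
exact: Pdiv.RingMonic.rmodpp (monicXn F t.+1).
Qed.

Definition qq (c : T) : T := in_qpoly Xt ((val c : {poly F}) %/ 'X).

Lemma qq0 : qq 0 = 0.
Proof. by rewrite /qq div0p raddf0. Qed.

Lemma decT (c : T) : c = qpolyC Xt (s0 c) + qpolyX Xt * qq c.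
Proof.
rewrite -{1}[c]in_val {1}(divp_eq (val c : {poly F}) 'X).
have := modp_XsubC (val c : {poly F}) 0; rewrite polyC0 subr0 horner_coef0 => ->.
rewrite rmorphD rmorphM addrC mulrC; congr (_ + _).
apply: val_inj; rewrite /= ; apply: (@in_qpoly_small _ Xt); rewrite size_polyC.
by apply: leq_ltn_trans (size_mk_monic_gt1 _); case: (_ == _).
Qed.
End Conc.

Section Conc2.
Variables (F : finFieldType) (t : nat) (w : nat -> {poly F}).
Local Notation T := (Rt F t.+1).
Local Notation Xt := ('X^(t.+1) : {poly F}).
Local Notation pi := (\pi_(Rtw t.+1 w)).

Definition eW : {rmorphism {poly F} -> Rtw t.+1 w} :=
  (\pi_(Rtw t.+1 w) \o map_poly (qpolyC Xt))%FUN.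

Lemma uW_pow : uW t.+1 w ^+ t.+1 = 0.
Proof. rewrite /uW /uRt -rmorphXn -rmorphXn /= qX_pow polyC0; exact: raddf0. Qed.

Lemma H1c (y : Rtw t.+1 w) : exists f z, y = eW f + uW t.+1 w * z.
Proof.
exists (map_poly (@s0 F t) (repr y)), (pi (map_poly (@qq F t) (repr y))).
rewrite /eW /uW /= -rmorphM -rmorphD; rewrite -{1}[y]reprK; congr pi.
apply/polyP => i; rewrite coefD coefCM !coef_map /= (coef_map_id0 _ _ (@qq0 F t)).
exact: decT.
Qed.

Lemma map_s0_emb (f : {poly F}) : map_poly (@s0 F t) (embRt t.+1 f) = f.
Proof. by apply/polyP => i; rewrite /embRt !coef_map /= s0C. Qed.

Lemma map_s0_u : map_poly (@s0 F t) (uRt F t.+1) = 0.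
Proof.
apply/polyP => j; rewrite coef_map /uRt coefC coef0 /=.
by case: eqP => _; [exact: s0X | exact: raddf0].
Qed.

Lemma map_s0_omega : map_poly (@s0 F t) (omega t.+1 w) = w 0%N.
Proof.
rewrite /omega rmorph_sum big_ord_recl /= expr0 mul1r map_s0_emb big1 ?addr0 //.
by move=> i _; rewrite rmorphM rmorphXn; rewrite -[X in X ^+ _ * _]/(map_poly (@s0 F t) (uRt F t.+1)) map_s0_u expr0n mul0r.
Qed.
End Conc2.

Section Conc3.
Variables (F : finFieldType) (t : nat) (w : nat -> {poly F}).
Variables (l : nat) (v : 'I_l -> {poly F}) (n : 'I_l -> nat).
Hypothesis l_gt0 : (0 < l)%N.
Hypothesis v_irr : forall j, irreducible_poly (v j).
Hypothesis n_gt0 : forall j, (0 < n j)%N.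
Hypothesis w0_fact : w 0%N = \prod_(j < l) v j ^+ n j.

Lemma nonunit : ~ exists c, c * omega t.+1 w = 1.
Proof.
move=> [c /(congr1 (map_poly (@s0 F t)))]; rewrite rmorphM rmorph1.
rewrite -[X in _ * X]/(map_poly (@s0 F t) (omega t.+1 w)) map_s0_omega w0_fact => h.
pose j0 : 'I_l := Ordinal l_gt0.
have : v j0 %| 1.
  rewrite -h dvdp_mull // (bigD1 j0) //= dvdp_mulr // dvdp_exp //.
have [s1 _] := v_irr j0.
by rewrite dvdp1 => /eqP e; move: s1; rewrite e.
Qed.

Lemma pi_omega : \pi_(Rtw t.+1 w) (omega t.+1 w) = 0.
Proof.
rewrite -(raddf0 \pi_(Rtw t.+1 w)); apply/eqquotP.
rewrite /Quotient.equiv subr0 unfold_in /pideal_pred.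
have -> : `[< ~ exists c, c * omega t.+1 w = 1 >] = true by apply/asboolP; exact: nonunit.
by apply/asboolP; exists 1; rewrite mul1r.
Qed.
End Conc3.

Lemma H2c (F : finFieldType) (t : nat) (w : nat -> {poly F})
  (l : nat) (v : 'I_l -> {poly F}) (n : 'I_l -> nat)
  (l_gt0 : (0 < l)%N) (v_irr : forall j, irreducible_poly (v j))
  (n_gt0 : forall j, (0 < n j)%N) (w0_fact : w 0%N = \prod_(j < l) v j ^+ n j) :
  exists z, eW t w (\prod_(j < l) v j ^+ n j) = uW t.+1 w * z.
Proof.
pose S := \sum_(i < t) uRt F t.+1 ^+ i * embRt t.+1 (w i.+1).
have hw : omega t.+1 w = embRt t.+1 (w 0%N) + uRt F t.+1 * S.
  rewrite /omega big_ord_recl expr0 mul1r /S mulr_sumr; congr (_ + _).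
  by apply: eq_bigr => i _; rewrite exprS mulrA.
exists (- \pi_(Rtw t.+1 w) S).
have e1 : embRt t.+1 (w 0%N) = omega t.+1 w - uRt F t.+1 * S by rewrite hw addrK.
rewrite -w0_fact; change (\pi_(Rtw t.+1 w) (embRt t.+1 (w 0%N)) = uW t.+1 w * - \pi_(Rtw t.+1 w) S).
have hB : \pi_(Rtw t.+1 w) (omega t.+1 w - uRt F t.+1 * S) =
    \pi_(Rtw t.+1 w) (omega t.+1 w) - \pi_(Rtw t.+1 w) (uRt F t.+1) * \pi_(Rtw t.+1 w) S.
  by rewrite rmorphB rmorphM.
rewrite e1 hB (@pi_omega F t w l v n l_gt0 v_irr n_gt0 w0_fact).
by rewrite sub0r mulrN.
Qed.


End Aux.

Theorem theorem3p2
  (p m t : nat) (F : finFieldType)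
  (p_prime : prime p) (m_gt0 : (0 < m)%N) (t_gt0 : (0 < t)%N)
  (cardF : #|F| = (p ^ m)%N)
  (w : nat -> {poly F})
  (l : nat) (v : 'I_l -> {poly F}) (n : 'I_l -> nat)
  (l_gt0 : (0 < l)%N)
  (v_irr : forall j, irreducible_poly (v j))
  (v_dist : forall i j, i != j -> ~~ (v i %= v j))
  (n_gt0 : forall j, (0 < n j)%N)
  (w0_fact : w 0%N = \prod_(j < l) v j ^+ n j) :
  let R := Rtw t w in
  let u : R := uW t w in
  let V (k : 'I_l -> nat) : R := \prod_(j < l) embW t w (v j) ^+ k j in
  forall I : R -> Prop, is_ideal I ->
    (* (a) trivial ideals *)
    trivial_ideal I
    \/
    (* (b) ideals contained in <u> *)
    (ideal_sub I (principal_ideal u) /\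
     exists (N : nat) (idx : 'I_N -> nat) (k : 'I_N -> 'I_l -> nat)
            (g : 'I_N -> R),
       [/\ forall a b : 'I_N, (a < b)%N -> (idx a < idx b)%N,
           forall a, (idx a + 2 <= t)%N,
           forall a j, (k a j <= n j)%N,
           forall a, exists j, (k a j < n j)%N &
           ideal_eq I (gen_ideal (fun a : 'I_N =>
              u ^+ (t.-1 - idx a) * V (k a) - u ^+ (t - idx a) * g a))])
    \/
    (* (c) ideals not contained in <u> *)
    (~ ideal_sub I (principal_ideal u) /\
     exists (k : 'I_l -> nat) (r : R) (J : R -> Prop),
       [/\ forall j, (k j <= n j)%N,
           is_ideal J,
           ideal_sub J (principal_ideal u) &
           ideal_eq I (ideal_sum (principal_ideal (V k + u * r)) J)]).
Proof.
case: t t_gt0 => // t _ R u V I hI; right.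
have H := (Aux.abs_main (e := Aux.eW t w) (@Aux.uW_pow F t w) (@Aux.H1c F t w) v_irr v_dist
          (@Aux.H2c F t w l v n l_gt0 v_irr n_gt0 w0_fact) hI).
exact H.
Qed.
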